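(* Let $\mathcal G$ be a doubly connected molecular graph in which there is at least one edge joining an internal molecule to an external molecule. Then for any two isolated subsets of molecules $\mathbf M_1$ and $\mathbf M_2$ of $\mathcal G$, either $\mathbf M_1\subseteq \mathbf M_2$, or $\mathbf M_2\subseteq \mathbf M_1$, or $\mathbf M_1\cap \mathbf M_2=\emptyset$.
   Context: A molecular graph here is a finite multigraph whose vertices are called molecules; the molecules are partitioned into internal molecules and external molecules. Each edge joins two distinct molecules and has a type: it is a diffusive edge, a blue solid edge, or an edge of some other type (e.g. a dotted edge); parallel edges are allowed. The subgraph consisting of the internal molecules and the edges between them is doubly connected if there exist two disjoint sets of edges, $\mathcal B_{black}$ consisting only of diffusive edges between internal molecules and $\mathcal B_{blue}$ consisting only of blue solid or diffusive edges between internal molecules, such that each of $\mathcal B_{black}$ and $\mathcal B_{blue}$ contains a spanning tree of the set of all internal molecules. The molecular graph $\mathcal G$ is called doubly connected if this internal subgraph is doubly connected (the spanning trees need not contain the external molecules). A (nonempty) subset $\mathbf M$ of internal molecules is called isolated if the total number of edges of $\mathcal G$ (of any type) joining a molecule of $\mathbf M$ to a molecule of $\mathbf M^c$ is exactly two, where $\mathbf M^c$ consists of all internal molecules not in $\mathbf M$ together with all external molecules. *)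

(* Defs.v *)
From mathcomp Require Import all_boot.
Set Implicit Arguments. Unset Strict Implicit. Unset Printing Implicit Defensive.

(* Molecular graph: molecules are a finite type V, internal molecules form the
   set [internal] (all other molecules are external); edges form a finite type E
   (so parallel edges are allowed), each edge e has endpoints [ends e]
   (required distinct) and a type [ety e]. *)
Inductive edge_type := Diffusive | BlueSolid | OtherEdge.
Section MolGraph.
Variables (V E : finType) (internal : {set V}) (ends : E -> V * V)
          (ety : E -> edge_type).

Definition between_internal (e : E) : bool :=
  ((ends e).1 \in internal) && ((ends e).2 \in internal).

Definition adj_by (T : {set E}) : rel V :=
  fun x y => [exists e in T, (ends e == (x, y)) || (ends e == (y, x))].

(* T is a spanning tree of the set of internal molecules: T consists of edges
   between internal molecules, connects all internal molecules, and has
   #|internal| - 1 edges (connected graph with n vertices and n-1 edges). *)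
Definition spanning_tree_internal (T : {set E}) : Prop :=
  (forall e, e \in T -> between_internal e) /\
  (forall x y, x \in internal -> y \in internal -> connect (adj_by T) x y) /\
  #|T|.+1 = #|internal|.

Definition contains_spanning_tree (B : {set E}) : Prop :=
  exists T : {set E}, T \subset B /\ spanning_tree_internal T.

Definition doubly_connected : Prop :=
  exists Bblack Bblue : {set E},
    [disjoint Bblack & Bblue] /\
    (forall e, e \in Bblack -> between_internal e /\ ety e = Diffusive) /\
    (forall e, e \in Bblue -> between_internal e /\
                              (ety e = BlueSolid \/ ety e = Diffusive)) /\
    contains_spanning_tree Bblack /\ contains_spanning_tree Bblue.

(* M^c = all molecules not in M (other internal ones and all external ones);
   an edge joins M to M^c iff exactly one endpoint lies in M. *)
Definition crossing_edges (M : {set V}) : {set E} :=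
  [set e | ((ends e).1 \in M) != ((ends e).2 \in M)].

Definition isolated (M : {set V}) : Prop :=
  M != set0 /\ M \subset internal /\ #|crossing_edges M| = 2.

End MolGraph.

(* Main.v *)
Require Import Defs.
From mathcomp Require Import all_boot.
Set Implicit Arguments. Unset Strict Implicit. Unset Printing Implicit Defensive.

Definition cl_t := (bool * bool)%type.
Definition mkP (t : bool * bool * bool * bool) (c : cl_t) : bool :=
  let: (p1, p2, p3, p4) := t in
  match c with
  | (true, true) => p1 | (true, false) => p2
  | (false, true) => p3 | (false, false) => p4 end.
Definition cls4 : seq cl_t := [:: (true,true); (true,false); (false,true); (false,false)].
Definition cls3 : seq cl_t := [:: (true,true); (true,false); (false,true)].
Definition bools := [:: true; false].
Definition tuples : seq (bool*bool*bool*bool) :=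
  flatten (map (fun a => flatten (map (fun b => flatten (map (fun c => map (fun d => (a, b, c, d)) bools) bools)) bools)) bools).

Definition check4 t (k1 k2 : cl_t * cl_t) :=
  [&& has (mkP t) cls4, has (fun c => ~~ mkP t c) cls4,
      mkP t k1.1 == mkP t k1.2 & mkP t k2.1 == mkP t k2.2].
Definition check3 t (k1 : cl_t * cl_t) :=
  [&& has (mkP t) cls3, has (fun c => ~~ mkP t c) cls3 &
      mkP t k1.1 == mkP t k1.2].

Lemma comb4 k1 k2 : has (fun t => check4 t k1 k2) tuples.
Proof. by move: k1 k2 => [[[] []] [[] []]] [[[] []] [[] []]]; vm_compute. Qed.
Lemma comb3 k1 : has (fun t => check3 t k1) tuples.
Proof. by move: k1 => [[[] []] [[] []]]; vm_compute. Qed.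

Lemma cover2 (T : finType) (X : Type) (f : T -> X) (x0 : X) (Q : {set T}) :
  #|Q| <= 2 -> exists k1 k2, forall e, e \in Q -> f e = k1 \/ f e = k2.
Proof.
rewrite cardE; case E: (enum Q) => [|a [|b [|c s]]] //= _.
- by exists x0, x0 => e; rewrite -mem_enum E.
- by exists (f a), (f a) => e; rewrite -mem_enum E inE => /eqP ->; left.
- exists (f a), (f b) => e; rewrite -mem_enum E !inE => /orP [] /eqP ->; by [left|right].
Qed.

Lemma cover1 (T : finType) (X : Type) (f : T -> X) (x0 : X) (Q : {set T}) :
  #|Q| <= 1 -> exists k1, forall e, e \in Q -> f e = k1.
Proof.
rewrite cardE; case E: (enum Q) => [|a [|b s]] //= _.
- by exists x0 => e; rewrite -mem_enum E.
- by exists (f a) => e; rewrite -mem_enum E inE => /eqP ->.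
Qed.

Section G.
Variables (V E : finType) (internal : {set V}) (ends : E -> V * V).

Lemma cut_lemma T (S : pred V) x y :
  spanning_tree_internal internal ends T -> x \in internal -> y \in internal ->
  S x -> ~~ S y -> exists2 e, e \in T & S (ends e).1 != S (ends e).2.
Proof.
move=> [_ [Hc _]] xi yi Sx Sy.
move: (Hc x y xi yi) => /connectP [p].
clear xi; elim: p x Sx => [|z p IH] x Sx /=.
  by move=> _ Exy; move: Sy; rewrite Exy Sx.
move=> /andP [/existsP [e /andP [eT He]] Hp] Hy.
case Sz: (S z); first exact: (IH z Sz Hp Hy).
exists e => //; case/orP: He => /eqP -> /=; by rewrite Sx Sz.
Qed.
End G.
Section Col.
Variables (V E : finType) (internal : {set V}) (ends : E -> V * V) (M1 M2 : {set V}).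

Definition clv (v : V) : cl_t := (v \in M1, v \in M2).
Definition UU := crossing_edges ends M1 :|: crossing_edges ends M2.

Lemma crossU e : clv (ends e).1 != clv (ends e).2 -> e \in UU.
Proof.
rewrite /clv xpair_eqE negb_and /UU !inE.
by case/orP => /negPf H; apply/orP; [left|right]; rewrite H.
Qed.

Lemma color4 Bc : contains_spanning_tree internal ends Bc ->
  (forall c, c \in cls4 -> exists2 v, v \in internal & clv v = c) ->
  3 <= #|Bc :&: UU|.
Proof.
move=> [T [TB HT]] Hrep; rewrite leqNgt ltnS; apply/negP => Hle.
have [k1 [k2 Hk]] := cover2 (fun e => (clv (ends e).1, clv (ends e).2))
   ((true,true),(true,true)) Hle.
have /hasP [t _ /and4P [/hasP [c cin Pc] /hasP [c' cin' Pc'] /eqP h1 /eqP h2]]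
  := comb4 k1 k2.
have [x xi xc] := Hrep c cin. have [y yi yc] := Hrep c' cin'.
have Sx : mkP t (clv x) by rewrite xc.
have Sy : ~~ mkP t (clv y) by rewrite yc.
have [e eT He] := cut_lemma (S := fun v => mkP t (clv v)) HT xi yi Sx Sy.
have eQ : e \in Bc :&: UU.
  rewrite inE (subsetP TB _ eT) /=; apply: crossU; apply: contra He => /eqP /= ->.
  by [].
move: He => /= /negP; apply.
by case: (Hk e eQ) => Ek; [move: h1 | move: h2]; rewrite -Ek /= => ->.
Qed.

Lemma color3 Bc : contains_spanning_tree internal ends Bc ->
  (forall c, c \in cls3 -> exists2 v, v \in internal & clv v = c) ->
  2 <= #|Bc :&: UU|.
Proof.
move=> [T [TB HT]] Hrep; rewrite leqNgt ltnS; apply/negP => Hle.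
have [k1 Hk] := cover1 (fun e => (clv (ends e).1, clv (ends e).2))
   ((true,true),(true,true)) Hle.
have /hasP [t _ /and3P [/hasP [c cin Pc] /hasP [c' cin' Pc'] /eqP h1]]
  := comb3 k1.
have [x xi xc] := Hrep c cin. have [y yi yc] := Hrep c' cin'.
have Sx : mkP t (clv x) by rewrite xc.
have Sy : ~~ mkP t (clv y) by rewrite yc.
have [e eT He] := cut_lemma (S := fun v => mkP t (clv v)) HT xi yi Sx Sy.
have eQ : e \in Bc :&: UU.
  rewrite inE (subsetP TB _ eT) /=; apply: crossU; apply: contra He => /eqP /= ->.
  by [].
move: He => /= /negP; apply.
by move: h1; rewrite -(Hk e eQ) /= => ->.
Qed.
End Col.

Theorem claim5p3 (V E : finType) (internal : {set V}) (ends : E -> V * V)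
    (ety : E -> edge_type)
    (Hloop : forall e : E, (ends e).1 != (ends e).2)
    (Hdc : doubly_connected internal ends ety)
    (Hext : exists e : E,
        (((ends e).1 \in internal) && ((ends e).2 \notin internal)) ||
        (((ends e).2 \in internal) && ((ends e).1 \notin internal)))
    (M1 M2 : {set V})
    (H1 : isolated internal ends M1) (H2 : isolated internal ends M2) :
  M1 \subset M2 \/ M2 \subset M1 \/ [disjoint M1 & M2].
Proof.
case: H1 => _ [sub1 c1]; case: H2 => _ [sub2 c2].
case: (boolP (M1 \subset M2)) => [h|/subsetPn [xb xb1 xb2]]; first by left.
case: (boolP (M2 \subset M1)) => [h|/subsetPn [xc xc2 xc1]]; first by right; left.
case: (boolP [disjoint M1 & M2]) => [h|]; first by right; right.
rewrite -setI_eq0 => /set0Pn [xa]; rewrite inE => /andP [xa1 xa2].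
exfalso.
have [Bb [Bu [dis [Hb [Hu [Tb Tu]]]]]] := Hdc.
have cU : #|UU ends M1 M2| <= 4 by rewrite /UU cardsU c1 c2 leq_subr.
set Qb := Bb :&: UU ends M1 M2; set Qu := Bu :&: UU ends M1 M2.
have QI : Qb :&: Qu = set0.
  have BI : Bb :&: Bu = set0 by apply/eqP; rewrite setI_eq0.
  apply/setP => e; move/setP: BI => /(_ e); rewrite !inE.
  by case: (e \in Bb); case: (e \in Bu); rewrite ?andbF.
have cQ : #|Qb :|: Qu| = #|Qb| + #|Qu| by rewrite cardsU QI cards0 subn0.
have sQ : Qb :|: Qu \subset UU ends M1 M2.
  by apply/subsetP => e; rewrite !inE => /orP [] /andP [] _.
have xai : xa \in internal by apply: (subsetP sub1).
have xbi : xb \in internal by apply: (subsetP sub1).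
have xci : xc \in internal by apply: (subsetP sub2).
have ca : clv M1 M2 xa = (true, true) by rewrite /clv xa1 xa2.
have cb : clv M1 M2 xb = (true, false) by rewrite /clv xb1 (negbTE xb2).
have cc : clv M1 M2 xc = (false, true) by rewrite /clv xc2 (negbTE xc1).
have leU := subset_leq_card sQ.
case: (boolP [exists v, [&& v \in internal, v \notin M1 & v \notin M2]]) =>
  [/existsP [xd /and3P [xdi xd1 xd2]] | Hnd].
  have cd : clv M1 M2 xd = (false, false) by rewrite /clv (negbTE xd1) (negbTE xd2).
  have reps : forall c, c \in cls4 -> exists2 v, v \in internal & clv M1 M2 v = c.
    move=> c; rewrite !inE => /or4P [] /eqP ->.
    - by exists xa. - by exists xb. - by exists xc. - by exists xd.
  have := color4 Tb reps; have := color4 Tu reps.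
  move: leU cU; rewrite cQ; set a := #|Qb|; set b := #|Qu|.
  move: #|UU _ _ _| => u; clear; move=> h1 h2 h3 h4.
  have h5 := leq_add h4 h3.
  have := leq_trans h5 (leq_trans h1 h2); by [].
have reps : forall c, c \in cls3 -> exists2 v, v \in internal & clv M1 M2 v = c.
  move=> c; rewrite !inE => /or3P [] /eqP ->.
  - by exists xa. - by exists xb. - by exists xc.
have h3 := color3 Tb reps; have h4 := color3 Tu reps.
have [e0 He0] := Hext.
have ext : forall v w, v \in internal -> w \notin internal ->
    clv M1 M2 v != clv M1 M2 w.
  move=> v w vi wn.
  have w1 : w \notin M1 by apply: contra wn; apply: (subsetP sub1).
  have w2 : w \notin M2 by apply: contra wn; apply: (subsetP sub2).
  move/existsPn: Hnd => /(_ v); rewrite vi /= negb_and !negbK => hv.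
  rewrite /clv xpair_eqE (negbTE w1) (negbTE w2).
  by case/orP: hv => ->; rewrite ?andbF.
have e0U : e0 \in UU ends M1 M2.
  apply: crossU; case/orP: (He0) => /andP [i n]; first exact: ext.
  rewrite eq_sym; exact: ext.
have e0Q : e0 \notin Qb :|: Qu.
  rewrite !inE negb_or !negb_and; apply/andP; split; apply/orP; left;
    apply/negP => eB;
    [have [bi _] := Hb e0 eB | have [bi _] := Hu e0 eB];
    by move: bi He0; rewrite /between_internal => /andP [-> ->].
have sQ' : e0 |: (Qb :|: Qu) \subset UU ends M1 M2.
  by apply/subsetP => e; rewrite in_setU1 => /orP [/eqP -> // | /(subsetP sQ)].
have := subset_leq_card sQ'; rewrite cardsU1 e0Q cQ.
move: cU h3 h4; set a := #|Qb|; set b := #|Qu|.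
move: #|UU _ _ _| => u; clear; move=> h1 h3 h4 h2.
have h5 := leq_add h3 h4.
by have := leq_trans (leq_add (leqnn 1) h5) (leq_trans h2 h1).
Qed.
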